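(* Let $q\ge 4$ be a power of $2$. Then there exist a linear AOA$(1,q-1,q+2,q)$ and a linear AOA$(3,q-1,q+2,q)$.
   Context: An orthogonal array OA$(t,k,v)$ (with $1\le t\le k$) is a $v^t\times k$ array with entries from a set $X$ of size $v$ such that, for every choice of $t$ of its columns, each $t$-tuple in $X^t$ appears exactly once as a row of the corresponding $v^t\times t$ subarray. For integers $1\le s\le t\le k$, an augmented orthogonal array AOA$(s,t,k,v)$ is a $v^t\times(k+1)$ array $A$ such that: (1) the first $k$ columns of $A$ form an OA$(t,k,v)$ on a symbol set $X$ of size $v$; (2) the last column of $A$ has entries from a set $Y$ of size $v^{t-s}$; (3) for any choice of $s$ of the first $k$ columns, these $s$ columns together with the last column contain every $(s+1)$-tuple of $X^s\times Y$ exactly once as a row. For a prime power $q$, an AOA$(s,t,k,q)$ is linear if $X=\mathbb{F}_q$, $Y=\mathbb{F}_q^{t-s}$, and its set of rows, regarded as vectors in $\mathbb{F}_q^{k}\times\mathbb{F}_q^{t-s}=\mathbb{F}_q^{k+t-s}$, is an $\mathbb{F}_q$-linear subspace. (When $q=4$, the second array is an AOA$(3,3,6,4)$, i.e. the case $s=t$.) *)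

(* Defs.v *)
From HB Require Import structures.
From mathcomp Require Import all_boot all_order all_algebra all_field.
Set Implicit Arguments. Unset Strict Implicit. Unset Printing Implicit Defensive.
Import GRing.Theory.
Local Open Scope ring_scope.

(* An array with N rows whose first k columns have entries in X and whose
   last column has entries in Y: row i is (A i).1 (entries of columns
   0..k-1) together with (A i).2 (entry of the last column). *)
Definition aoa_array (X Y : finType) (N k : nat) :=
  'I_N -> {ffun 'I_k -> X} * Y.

(* Augmented orthogonal array AOA(s,t,k,v) with v = #|X|, on symbol sets
   X (size v) and Y, with v^t rows.
   "for every choice of t columns, every t-tuple appears exactly once"
   is stated as: for every injective selection c of t columns, the map
   row |-> (entries of the row at columns c) is a bijection onto X^t. *)
Definition is_AOA (X Y : finType) (s t k : nat)
    (A : aoa_array X Y (#|X| ^ t) k) : Prop :=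
  [/\ (1 <= s <= t)%N, (t <= k)%N,
      #|Y| = (#|X| ^ (t - s))%N,
      (forall c : 'I_t -> 'I_k, injective c ->
         bijective (fun i => [ffun j => (A i).1 (c j)]))
    & (forall c : 'I_s -> 'I_k, injective c ->
         bijective (fun i => ([ffun j => (A i).1 (c j)], (A i).2)))].

Definition aoa_row (F : finFieldType) (N k r : nat)
    (A : aoa_array F 'rV[F]_r N k) (i : 'I_N) : 'rV[F]_(k + r) :=
  row_mx (\row_j (A i).1 j) (A i).2.

Definition aoa_rows (F : finFieldType) (N k r : nat)
    (A : aoa_array F 'rV[F]_r N k) : {set 'rV[F]_(k + r)} :=
  [set aoa_row A i | i : 'I_N].

Definition is_linear_AOA (F : finFieldType) (s t k : nat)
    (A : aoa_array F 'rV[F]_(t - s) (#|F| ^ t) k) : Prop :=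
  @is_AOA F _ s t k A /\
  (0 \in aoa_rows A /\
   forall (a : F) (u v : 'rV[F]_(k + (t - s))),
     u \in aoa_rows A -> v \in aoa_rows A -> a *: u + v \in aoa_rows A).
Arguments is_linear_AOA {F} s t k A.

(* Main.v *)
Require Import Defs.
From mathcomp Require Import all_boot all_order all_algebra all_field.
From HB Require Import structures.
From mathcomp Require Import all_boot all_order all_algebra all_field.
From mathcomp Require Import ring zify.
Set Implicit Arguments. Unset Strict Implicit. Unset Printing Implicit Defensive.
Import GRing.Theory.
Local Open Scope ring_scope.
Section S.
Variable F : finFieldType.
Hypothesis two0 : 2%:R = 0 :> F.
Lemma oppF (x : F) : - x = x.
Proof. by apply/eqP; rewrite eq_sym -subr_eq0 opprK -mulr2n -mulr_natl two0 mul0r. Qed.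
Definition D9 (u0 u1 u2 v0 v1 v2 w0 w1 w2 : F) :=
  u0 * (v1 * w2 - v2 * w1) - u1 * (v0 * w2 - v2 * w0) + u2 * (v0 * w1 - v1 * w0).
Arguments D9 : simpl never.
Lemma D9T u0 u1 u2 v0 v1 v2 w0 w1 w2 :
  D9 u0 u1 u2 v0 v1 v2 w0 w1 w2 = D9 u0 v0 w0 u1 v1 w1 u2 v2 w2.
Proof. rewrite /D9; ring. Qed.
Lemma indep3 u0 u1 u2 v0 v1 v2 w0 w1 w2 a b c :
  D9 u0 u1 u2 v0 v1 v2 w0 w1 w2 != 0 ->
  a * u0 + b * v0 + c * w0 = 0 -> a * u1 + b * v1 + c * w1 = 0 ->
  a * u2 + b * v2 + c * w2 = 0 -> [/\ a = 0, b = 0 & c = 0].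
Proof.
move=> nz e0 e1 e2.
have Ha : a * D9 u0 u1 u2 v0 v1 v2 w0 w1 w2 =
  D9 (a * u0 + b * v0 + c * w0) (a * u1 + b * v1 + c * w1) (a * u2 + b * v2 + c * w2) v0 v1 v2 w0 w1 w2 by rewrite /D9; ring.
have Hb : b * D9 u0 u1 u2 v0 v1 v2 w0 w1 w2 =
  D9 u0 u1 u2 (a * u0 + b * v0 + c * w0) (a * u1 + b * v1 + c * w1) (a * u2 + b * v2 + c * w2) w0 w1 w2 by rewrite /D9; ring.
have Hc : c * D9 u0 u1 u2 v0 v1 v2 w0 w1 w2 =
  D9 u0 u1 u2 v0 v1 v2 (a * u0 + b * v0 + c * w0) (a * u1 + b * v1 + c * w1) (a * u2 + b * v2 + c * w2) by rewrite /D9; ring.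
rewrite e0 e1 e2 /D9 in Ha Hb Hc.
split; apply/eqP; rewrite -(mulIr_eq0 _ (mulIf nz)) ?Ha ?Hb ?Hc; apply/eqP; ring.
Qed.
Lemma addF_neq0 (x y : F) : x != y -> x + y != 0.
Proof. by move=> h; rewrite -[y]oppF subr_eq0. Qed.
Definition idx := (F + bool)%type.
Definition p (r : nat) (j : idx) : F :=
  match j with inl x => x ^+ r | inr b => if b then (r == 2)%:R else (r == 1)%:R end.
Definition detP (j1 j2 j3 : idx) :=
  D9 (p 0 j1) (p 1 j1) (p 2 j1) (p 0 j2) (p 1 j2) (p 2 j2) (p 0 j3) (p 1 j3) (p 2 j3).
Ltac try_fact c :=
  match goal with |- context [D9 ?a1 ?a2 ?a3 ?a4 ?a5 ?a6 ?a7 ?a8 ?a9] => let d := constr:(D9 a1 a2 a3 a4 a5 a6 a7 a8 a9) in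
  first [ have ->: d = c by rewrite /D9; ring
        | have ->: d = - c by rewrite /D9; ring ] end.
Lemma detP_neq0 j1 j2 j3 : j1 != j2 -> j1 != j3 -> j2 != j3 -> detP j1 j2 j3 != 0.
Proof.
rewrite /detP.
case: j1 => [x|[]]; case: j2 => [y|[]]; case: j3 => [z|[]] //= ;
  rewrite ?expr0 ?expr1 /= ?(inj_eq (@inl_inj _ _)) => h1 h2 h3;
  try first [ try_fact ((x - y) * (x - z) * (y - z))
        | try_fact ((x - y) * (x + y)) | try_fact (x - y)
        | try_fact ((x - z) * (x + z)) | try_fact (x - z)
        | try_fact ((y - z) * (y + z)) | try_fact (y - z)
        | try_fact (1 : F) ];
  rewrite ?oppr_eq0; repeat apply: mulf_neq0;
  rewrite ?subr_eq0 ?addF_neq0 ?oner_eq0 //.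
Qed.
Hypothesis cardF0 : (#|F|%:R : F) = 0.
Hypothesis cardF4 : (4 <= #|F|)%N.
Lemma exists_a : exists a : F, (a != 0) && (a != 1).
Proof.
apply/existsP; apply: contraLR cardF4; rewrite negb_exists => /forallP H.
rewrite -leqNgt.
have : (#|F| <= #|[set (0:F)%R; 1%R]|)%N.
  apply: subset_leq_card; apply/subsetP => a _; move: (H a).
  by rewrite !inE negb_and !negbK => /orP[]->; rewrite ?orbT.
by rewrite cards2 => /leq_trans; apply; case: (_ != _).
Qed.
Lemma sum_id : \sum_(x : F) x = 0.
Proof.
have [a /andP[a0 a1]] := exists_a.
have E : \sum_(x : F) x = a * \sum_(x : F) x.
  by rewrite {1}(reindex_inj (mulfI a0)) /= mulr_sumr.
apply/eqP; move: E => /eqP; rewrite -subr_eq0 -{1}[\sum_x x]mul1r -mulrBl mulf_eq0 subr_eq0.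
by rewrite eq_sym (negbTE a1).
Qed.
Lemma sqrD (u v : F) : (u + v) ^+ 2 = u ^+ 2 + v ^+ 2.
Proof. by rewrite sqrrD -mulr_natr two0 mulr0 addr0. Qed.
Lemma sum_sq : \sum_(x : F) x ^+ 2 = 0.
Proof.
rewrite -(big_morph (fun x : F => x ^+ 2) sqrD (expr0n _ 2)).
by rewrite sum_id expr0n.
Qed.
Lemma sum_inv : \sum_(x : F) x^-1 = 0.
Proof. by rewrite (reindex_inj (@invr_inj F)) /=; under eq_bigr do rewrite invrK; exact: sum_id. Qed.
Lemma sum_inv2 : \sum_(x : F) x^-1 ^+ 2 = 0.
Proof. by rewrite (reindex_inj (@invr_inj F)) /=; under eq_bigr do rewrite invrK; exact: sum_sq. Qed.
Lemma sum_one : \sum_(x : F) (1 : F) = 0.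
Proof. by rewrite sumr_const; exact: cardF0. Qed.
Lemma sum_unit : \sum_(x : F) x * x^-1 = 1.
Proof.
have E : \sum_(x : F) (1 - x * x^-1) = 1.
  rewrite (bigD1 0) //= mul0r subr0 big1 ?addr0 // => x nx.
  by rewrite mulfV ?subrr.
move: E; rewrite sumrB sum_one sub0r => E.
by rewrite -[LHS]opprK E oppF.
Qed.
Definition sg (j : idx) : idx := match j with inl x => inl x^-1 | inr b => inr b end.
Definition qq r j := p r (sg j).
Lemma pt_eq (x : F) : [/\ x ^+ 2 * x^-1 = x, x * x^-1 ^+ 2 = x^-1 &
   x ^+ 2 * x^-1 ^+ 2 = x * x^-1].
Proof.
have [->|nz] := eqVneq x 0; first by rewrite invr0 !expr0n !mul0r.
by split; field.
Qed.
Lemma pt1 (x : F) : x ^+ 2 * x^-1 = x. Proof. by case: (pt_eq x). Qed.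
Lemma pt2 (x : F) : x * x^-1 ^+ 2 = x^-1. Proof. by case: (pt_eq x). Qed.
Lemma pt3 (x : F) : x ^+ 2 * x^-1 ^+ 2 = x * x^-1. Proof. by case: (pt_eq x). Qed.
Lemma orth r s : (r < 3)%N -> (s < 3)%N -> \sum_(j : idx) p r j * qq s j = 0.
Proof.
rewrite /qq big_sumType big_bool /=.
case: r => [|[|[|r]]] //; case: s => [|[|[|s]]] // _ _; rewrite /= ?mulr0 ?mulr1 ?mul0r ?mul1r ?addr0 ?add0r ?expr0 ?expr1.
all: under eq_bigr do rewrite ?mulr1 ?mul1r ?pt1 ?pt2 ?pt3.
all: rewrite ?sum_one ?sum_id ?sum_sq ?sum_inv ?sum_inv2 ?sum_unit //.
Qed.
Definition inC (w : idx -> F) := forall r, (r < 3)%N -> \sum_j w j * p r j = 0.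
Lemma inC_lin a w1 w2 : inC w1 -> inC w2 -> inC (fun j => a * w1 j + w2 j).
Proof.
move=> h1 h2 r hr; under eq_bigr do rewrite mulrDl -mulrA.
by rewrite big_split /= -mulr_sumr h1 // h2 // mulr0 addr0.
Qed.
Lemma inC_qq s : (s < 3)%N -> inC (qq s).
Proof. by move=> hs r hr; under eq_bigr do rewrite mulrC; exact: orth. Qed.
Lemma sum3 (f : idx -> F) j1 j2 j3 : j1 != j2 -> j1 != j3 -> j2 != j3 ->
  (forall j, j \notin [:: j1; j2; j3] -> f j = 0) ->
  \sum_j f j = f j1 + f j2 + f j3.
Proof.
move=> h12 h13 h23 hf.
rewrite (bigD1 j1) //= (bigD1 j2) /=; last by rewrite eq_sym h12.
rewrite (bigD1 j3) /=; last by rewrite eq_sym h13 eq_sym h23.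
rewrite big1 ?addr0 ?addrA // => j /andP[/andP[a b] c]; apply: hf.
by rewrite !inE negb_or a negb_or b c.
Qed.
Lemma L2core w j1 j2 j3 : j1 != j2 -> j1 != j3 -> j2 != j3 -> inC w ->
  (forall j, j \notin [:: j1; j2; j3] -> w j = 0) -> forall j, w j = 0.
Proof.
move=> h12 h13 h23 hC hw.
have E r : (r < 3)%N -> w j1 * p r j1 + w j2 * p r j2 + w j3 * p r j3 = 0.
  move=> hr; rewrite -(hC r hr) (sum3 h12 h13 h23) // => j /hw ->; by rewrite mul0r.
have [a b c] := indep3 (detP_neq0 h12 h13 h23) (E 0%N isT) (E 1%N isT) (E 2%N isT).
move=> j; case: (boolP (j \in [:: j1; j2; j3])); last exact: hw.
by rewrite !inE => /orP[/eqP->|/orP[/eqP->|/eqP->]].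
Qed.
Lemma pad (T : finType) (S : {set T}) n : (#|S| <= n <= #|T|)%N ->
  exists U : {set T}, S \subset U /\ #|U| = n.
Proof.
elim: n => [|n IH].
  by rewrite leqn0 => /andP[/eqP/cards0_eq -> _]; exists set0; rewrite cards0 sub0set.
move=> /andP[hS hn].
case: (ltngtP #|S| n.+1) hS => // [hlt|heq] _; last by exists S.
have [U [sU cU]] := IH (andb_true_intro (conj hlt (ltnW hn))).
have /set0Pn [y] : ~: U != set0 by rewrite -card_gt0 cardsCs setCK cU subn_gt0.
rewrite inE => yU.
exists (y |: U); split; first by rewrite (subset_trans sU) ?subsetUr.
by rewrite cardsU1 yU cU.
Qed.
Lemma card_idx : #|{: idx}| = (#|F| + 2)%N.
Proof. by rewrite card_sum card_bool. Qed.
Lemma L2card w : inC w -> (#|[set j | w j != 0%R]| <= 3)%N -> forall j, w j = 0.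
Proof.
move=> hC hS.
have [U [sU cU]] : exists U : {set idx}, [set j | w j != 0%R] \subset U /\ #|U| = 3%N.
  by apply: pad; rewrite hS card_idx /= addn2 ltnS ltnS; apply: leq_trans cardF4.
rewrite cardE in cU.
move: cU (enum_uniq U) (mem_enum U).
case: (enum U) => [|j1 [|j2 [|j3 [|j4 s]]]] //= _.
rewrite !inE !negb_or !andbT => /andP[/andP[h12 h13] h23] hU.
apply: (L2core h12 h13 h23 hC) => j hj.
apply/eqP; apply: contraR hj => hj.
have : j \in U by apply: (subsetP sU); rewrite inE.
by rewrite -hU.
Qed.
Variable x0 : F.
Local Notation F' := {x in predC1 x0}.
Local Notation E := {ffun F' -> F}.
Definition ext (e : E) (x : F) : F := if insub x is Some y then e y else \sum_y e y.
Definition cw (e : E) (j : idx) : F :=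
  match j with
  | inl x => ext e x
  | inr false => \sum_x ext e x * x
  | inr true => \sum_x ext e x * x ^+ 2 end.
Lemma double0 (a : F) : a + a = 0.
Proof. by rewrite -mulr2n -mulr_natr two0 mulr0. Qed.
Lemma ext_val e (y : F') : ext e (val y) = e y.
Proof. by rewrite /ext valK. Qed.
Lemma ext_x0 e : ext e x0 = \sum_y e y.
Proof. by rewrite /ext insubF // !inE eqxx. Qed.
Lemma sum_ext e : \sum_x ext e x = 0.
Proof.
rewrite (bigD1 x0) //= ext_x0.
have -> : \sum_(x | x != x0) ext e x = \sum_y e y.
  by rewrite (big_sub (predC1 x0) (ext e)); apply: eq_bigr => y _; rewrite ext_val.
exact: double0.
Qed.
Lemma inC_cw e : inC (cw e).
Proof.
move=> r; rewrite big_sumType big_bool /=.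
case: r => [|[|[|r]]] // _ /=; rewrite ?mulr0 ?mulr1 ?addr0 ?add0r.
- by under eq_bigr do rewrite expr0 mulr1; exact: sum_ext.
- by under eq_bigr do rewrite expr1; rewrite double0.
- by rewrite double0.
Qed.
Definition lc (a : F) (e1 e2 : E) : E := [ffun y => a * e1 y + e2 y].
Lemma extL (a : F) (e1 e2 : E) x : ext (lc a e1 e2) x = a * ext e1 x + ext e2 x.
Proof.
rewrite /ext; case: insubP => [y _ _|_]; first by rewrite !ffunE.
under eq_bigr do rewrite !ffunE.
by rewrite big_split /= mulr_sumr.
Qed.
Lemma cwL (a : F) (e1 e2 : E) j : cw (lc a e1 e2) j = a * cw e1 j + cw e2 j.
Proof.
case: j => [x|[]] /=; rewrite ?extL //.
- by under eq_bigr do rewrite extL mulrDl -mulrA; rewrite big_split /= mulr_sumr.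
- by under eq_bigr do rewrite extL mulrDl -mulrA; rewrite big_split /= mulr_sumr.
Qed.
Lemma cw_inj e : (forall j, cw e j = 0) -> e = 0.
Proof. by move=> h; apply/ffunP => y; rewrite ffunE -ext_val; exact: (h (inl _)). Qed.
Definition tau (j : 'I_(#|F| + 2)) : idx :=
  match split j with inl x => inl (enum_val x) | inr b => inr (b != ord0) end.
Lemma tau_inj : injective tau.
Proof.
move=> j1 j2; rewrite /tau -{2}(splitK j1) -{2}(splitK j2).
case: (split j1) => [a|a]; case: (split j2) => [b|b] //=.
- by case=> /enum_val_inj ->.
- case: a b => [[|[|a]] ha] [[|[|b]] hb] //= _; by rewrite (bool_irrelevance ha hb).
Qed.
Lemma cardE : (#|F| ^ (#|F| - 1))%N = #|{: E}|.
Proof. by rewrite card_ffun card_sig cardC1 subn1. Qed.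
Definition ee (i : 'I_(#|F| ^ (#|F| - 1))) : E := enum_val (cast_ord cardE i).
Lemma ee_inj : injective ee.
Proof. by move=> i1 i2 /enum_val_inj /cast_ord_inj. Qed.
Lemma ee_surj e : ee (cast_ord (esym cardE) (enum_rank e)) = e.
Proof. by rewrite /ee cast_ordKV enum_rankK. Qed.
Variables (s : nat) (Pset : {set F}) (kappa : E -> idx -> F).
Hypotheses (hs1 : (1 <= s)%N) (hst : (s <= #|F| - 1)%N) (hP : x0 \notin Pset)
  (cP : #|Pset| = s).
Hypothesis kC : forall e, inC (kappa e).
Hypothesis kP : forall e x, x \in Pset -> kappa e (inl x) = cw e (inl x).
Hypothesis kL : forall a e1 e2 j, kappa (lc a e1 e2) j = a * kappa e1 j + kappa e2 j.
Hypothesis kM : forall e (c : 'I_s -> idx), injective c ->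
  (forall i, kappa e (c i) = 0) -> forall j, kappa e j = 0.
Definition Dset : {set F} := ~: (x0 |: Pset).
Lemma cardD : (#|F| - 1 - s)%N = #|Dset|.
Proof. by rewrite /Dset cardsCs setCK cardsU1 hP cP /= subnDA. Qed.
Definition g e j := cw e j - kappa e j.
Definition Y (e : E) : 'rV[F]_(#|F| - 1 - s) :=
  \row_i g e (inl (enum_val (cast_ord cardD i))).
Lemma gL a e1 e2 j : g (lc a e1 e2) j = a * g e1 j + g e2 j.
Proof. by rewrite /g cwL kL; ring. Qed.
Lemma YL a e1 e2 : Y (lc a e1 e2) = a *: Y e1 + Y e2.
Proof. by apply/rowP => i; rewrite !mxE gL. Qed.
Lemma Y0 e : Y e = 0 -> forall j, cw e j = kappa e j.
Proof.
move=> hY.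
have hg : inC (g e).
  by move=> r hr; rewrite /g; under eq_bigr do rewrite mulrBl; rewrite sumrB inC_cw // kC // subrr.
have h12 : inl x0 != inr false :> idx by [].
have h13 : inl x0 != inr true :> idx by [].
have h23 : inr false != inr true :> idx by [].
have := L2core h12 h13 h23 hg.
have H : forall j, j \notin [:: inl x0; inr false; inr true] -> g e j = 0.
  case=> [x|[]]; rewrite !inE //= => hx'.
  have hx : x != x0 by apply: contra hx' => /eqP ->; rewrite eqxx.
  case: (boolP (x \in Pset)) => xP; first by rewrite /g kP // subrr.
  have xD : x \in Dset by rewrite !inE negb_or hx xP.
  have := congr1 (fun M : 'rV_ _ => M 0 (cast_ord (esym cardD) (enum_rank_in xD x))) hY.
  by rewrite !mxE cast_ordKV enum_rankK_in.
move=> /(_ H) hz j; apply/eqP; rewrite -subr_eq0; apply/eqP; exact: hz.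
Qed.
Definition Arr : aoa_array F 'rV[F]_(#|F| - 1 - s) (#|F| ^ (#|F| - 1)) (#|F| + 2) :=
  fun i => ([ffun j => cw (ee i) (tau j)], Y (ee i)).
Definition idxof (e : E) := cast_ord (esym cardE) (enum_rank e).
Lemma diff0 (e1 e2 : E) : (forall j, cw (lc (-1) e2 e1) j = 0) -> e1 = e2.
Proof.
move=> /cw_inj h; apply/ffunP => y; have := congr1 (fun f : E => f y) h.
by rewrite !ffunE => /eqP; rewrite mulN1r addrC subr_eq0 => /eqP.
Qed.
Lemma main_gen : is_linear_AOA s (#|F| - 1) (#|F| + 2) Arr.
Proof.
split; first split.
- by rewrite hs1 hst.
- by rewrite (leq_trans (leq_subr _ _) (leq_addr _ _)).
- by rewrite card_mx mul1n.
- move=> c cinj; apply: inj_card_bij; last by rewrite card_ffun !card_ord.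
  move=> i1 i2 /ffunP H; apply: ee_inj; apply: diff0.
  have hz j : cw (lc (-1) (ee i2) (ee i1)) (tau (c j)) = 0.
    by move: (H j); rewrite !ffunE cwL => ->; rewrite mulN1r addNr.
  apply: L2card (inC_cw _) _.
  have sub : [set j | cw (lc (-1) (ee i2) (ee i1)) j != 0%R] \subset ~: [set tau (c j) | j in 'I_(#|F| - 1)].
    apply/subsetP => j; rewrite !inE; apply: contra => /imsetP [j' _ ->]; by rewrite hz.
  apply: leq_trans (subset_leq_card sub) _.
  rewrite cardsCs setCK card_imset; last by move=> a b /tau_inj /cinj.
  rewrite card_ord card_idx. lia.
- move=> c cinj; apply: inj_card_bij; last by rewrite card_prod card_ffun card_mx !card_ord mul1n -expnD subnKC.
  move=> i1 i2 [] /ffunP H HY; apply: ee_inj; apply: diff0.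
  have hz j : cw (lc (-1) (ee i2) (ee i1)) (tau (c j)) = 0.
    by move: (H j); rewrite !ffunE cwL => ->; rewrite mulN1r addNr.
  have hY : Y (lc (-1) (ee i2) (ee i1)) = 0 by rewrite YL HY scaleN1r addNr.
  have hk := Y0 hY.
  have hk0 : forall j, kappa (lc (-1) (ee i2) (ee i1)) j = 0.
    apply: (kM (c := fun j => tau (c j))); first by move=> a b /tau_inj /cinj.
    by move=> j; rewrite -hk.
  by move=> j; rewrite hk.
- split.
  + pose z0 : E := ee (cast_ord (esym cardE) (enum_rank (0 : E))).
    apply/imsetP; exists (idxof (lc (-1) z0 z0)) => //.
    rewrite /aoa_row /Arr /idxof ee_surj YL scaleN1r addNr.
    apply/esym/rowP => j; rewrite !mxE; case: splitP => k _; rewrite !mxE ?ffunE ?cwL ?mulN1r ?addNr //.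
  + move=> a u v /imsetP [i1 _ ->] /imsetP [i2 _ ->].
    apply/imsetP; exists (idxof (lc a (ee i1) (ee i2))) => //.
    rewrite /aoa_row /Arr /idxof ee_surj YL scale_row_mx add_row_mx; congr row_mx.
    by apply/rowP => j; rewrite !mxE !ffunE cwL.
Qed.
End S.
Section T.
Variable F : finFieldType.
Hypothesis two0 : 2%:R = 0 :> F.
Hypothesis cardF0 : (#|F|%:R : F) = 0.
Hypothesis cardF4 : (4 <= #|F|)%N.
Lemma exists_alpha : exists al : F, forall u, u ^+ 2 + u != al.
Proof.
case: (boolP [exists al : F, [forall u : F, u ^+ 2 + u != al]]) => [hex|].
  case/existsP: hex => al H; exists al => u; exact: (forallP H u).
rewrite negb_exists => /forallP H.
pose g (al : F) : F := odflt 0 [pick u | u ^+ 2 + u == al].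
have fg al : (g al) ^+ 2 + g al = al.
  rewrite /g; case: pickP => [u /eqP //|none].
  by move: (H al); rewrite negb_forall => /existsP [u]; rewrite negbK none.
have ginj : injective g by move=> a b hab; rewrite -(fg a) -(fg b) hab.
have [h gh hg] := injF_bij ginj.
have e1 : h 1 = 0 by rewrite -(fg (h 1)) hg expr1n (double0 two0).
have e0 : h 0 = 0 by rewrite -(fg (h 0)) hg expr0n addr0.
by have := hg 1; rewrite e1 -e0 hg => /eqP; rewrite eq_sym oner_eq0.
Qed.
Lemma cardF4' : (3 < #|F|)%N. Proof. exact: cardF4. Qed.
Lemma s1_exists : exists A : aoa_array F 'rV[F]_((#|F| - 1) - 1) (#|F| ^ (#|F| - 1)) (#|F| + 2),
  is_linear_AOA 1 (#|F| - 1) (#|F| + 2) A.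
Proof.
have [al hal] := exists_alpha.
pose w (j : idx F) : F := al * qq 0 j + qq 1 j + qq 2 j.
have wnz j : w j != 0.
  case: j => [x|[]]; rewrite /w /qq /p /= ?expr0 ?expr1 ?mulr0 ?mulr1 ?add0r ?addr0 ?oner_eq0 //.
  apply: contra (hal x^-1) => /eqP h; move/eqP: h; rewrite -addrA addr_eq0 => /eqP ->.
  by rewrite oppF // addrC.
have wC : inC w.
  move=> r hr; rewrite /w; under eq_bigr do rewrite !mulrDl -mulrA.
  by rewrite !big_split /= -mulr_sumr !inC_qq // mulr0 !addr0.
have hP : (0 : F) \notin [set 1] by rewrite inE eq_sym oner_eq0.
have cP : #|[set (1 : F)]| = 1%N by rewrite cards1.
pose kappa (e : {ffun {x : F | x \in predC1 0} -> F}) j := cw e (inl 1) / w (inl 1) * w j.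
exists (Arr kappa hP cP); apply: main_gen => //.
- by rewrite subn1 -ltnS prednK ?(leq_trans _ cardF4) // (ltn_trans _ cardF4).
- by move=> e r hr; rewrite /kappa; under eq_bigr do rewrite -mulrA; rewrite -mulr_sumr wC // mulr0.
- by move=> e x; rewrite inE => /eqP ->; rewrite /kappa divfK.
- by move=> a e1 e2 j; rewrite /kappa cwL; ring.
- move=> e c _ /(_ ord0); rewrite /kappa => /eqP; rewrite mulf_eq0 (negbTE (wnz _)) orbF => /eqP h j.
  by rewrite h mul0r.
Qed.
Lemma sg_inj : injective (@sg F).
Proof.
move=> [x|b] [y|b'] //= [] //; by move/invr_inj ->.
Qed.
Lemma cramer (m00 m01 m02 m10 m11 m12 m20 m21 m22 b0 b1 b2 : F) :
  D9 m00 m01 m02 m10 m11 m12 m20 m21 m22 != 0 ->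
  let D := D9 m00 m01 m02 m10 m11 m12 m20 m21 m22 in
  let c0 := D9 b0 m01 m02 b1 m11 m12 b2 m21 m22 / D in
  let c1 := D9 m00 b0 m02 m10 b1 m12 m20 b2 m22 / D in
  let c2 := D9 m00 m01 b0 m10 m11 b1 m20 m21 b2 / D in
  [/\ c0 * m00 + c1 * m01 + c2 * m02 = b0,
      c0 * m10 + c1 * m11 + c2 * m12 = b1 &
      c0 * m20 + c1 * m21 + c2 * m22 = b2].
Proof. rewrite /D9 => nz /=; split; field; exact: nz. Qed.
Lemma s3_exists : exists A : aoa_array F 'rV[F]_((#|F| - 1) - 3) (#|F| ^ (#|F| - 1)) (#|F| + 2),
  is_linear_AOA 3 (#|F| - 1) (#|F| + 2) A.
Proof.
have [a /andP[a0 a1]] := exists_a cardF4.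
have a10 : a + 1 != 0 by rewrite addF_neq0.
have a11 : a + 1 != 1 by rewrite -subr_eq0 addrK.
have aa1 : a != a + 1 by rewrite eq_sym -subr_eq0 addrAC subrr add0r oner_eq0.
pose P1 : idx F := inl 1. pose P2 : idx F := inl a. pose P3 : idx F := inl (a + 1).
have Dnz : D9 (qq 0 P1) (qq 1 P1) (qq 2 P1) (qq 0 P2) (qq 1 P2) (qq 2 P2)
              (qq 0 P3) (qq 1 P3) (qq 2 P3) != 0.
  apply: (detP_neq0 two0); rewrite (inj_eq sg_inj) /P1 /P2 /P3 (inj_eq (@inl_inj _ _)) //.
  - by rewrite eq_sym.
  - by rewrite eq_sym.
pose b (e : {ffun {x : F | x \in predC1 0} -> F}) (P : idx F) := cw e P.
pose Dm := D9 (qq 0 P1) (qq 1 P1) (qq 2 P1) (qq 0 P2) (qq 1 P2) (qq 2 P2)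
              (qq 0 P3) (qq 1 P3) (qq 2 P3).
pose be0 e := D9 (b e P1) (qq 1 P1) (qq 2 P1) (b e P2) (qq 1 P2) (qq 2 P2)
              (b e P3) (qq 1 P3) (qq 2 P3) / Dm.
pose be1 e := D9 (qq 0 P1) (b e P1) (qq 2 P1) (qq 0 P2) (b e P2) (qq 2 P2)
              (qq 0 P3) (b e P3) (qq 2 P3) / Dm.
pose be2 e := D9 (qq 0 P1) (qq 1 P1) (b e P1) (qq 0 P2) (qq 1 P2) (b e P2)
              (qq 0 P3) (qq 1 P3) (b e P3) / Dm.
pose kappa e j := be0 e * qq 0 j + be1 e * qq 1 j + be2 e * qq 2 j.
have hP : (0 : F) \notin [set 1; a; a + 1].
  by rewrite !inE !negb_or eq_sym oner_eq0 eq_sym a0 eq_sym a10.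
have cP : #|[set (1 : F); a; a + 1]| = 3%N.
  rewrite -setUA cardsU1 cards2 !inE aa1 negb_or.
  by rewrite eq_sym a1 /= eq_sym a11.
exists (Arr kappa hP cP); apply: main_gen => //.
- by rewrite subn1 -ltnS prednK ?(leq_trans _ cardF4) // (ltn_trans _ cardF4).
- move=> e r hr; rewrite /kappa; under eq_bigr do rewrite !mulrDl -!mulrA.
  by rewrite !big_split /= -!mulr_sumr !inC_qq // !mulr0 !addr0.
- move=> e x; have [h1 h2 h3] := cramer (b e P1) (b e P2) (b e P3) Dnz.
  by rewrite !inE => /orP[/orP[/eqP->|/eqP->]|/eqP->]; [exact: h1|exact: h2|exact: h3].
- move=> a' e1 e2 j; rewrite /kappa /be0 /be1 /be2 /b !cwL /D9; ring.
- move=> e c cinj hc.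
  have o01 : c (@Ordinal 3 0 isT) != c (@Ordinal 3 1 isT) by rewrite (inj_eq cinj).
  have o02 : c (@Ordinal 3 0 isT) != c (@Ordinal 3 2 isT) by rewrite (inj_eq cinj).
  have o12 : c (@Ordinal 3 1 isT) != c (@Ordinal 3 2 isT) by rewrite (inj_eq cinj).
  have := detP_neq0 two0 o01 o02 o12.
  rewrite -(inj_eq sg_inj) in o01; rewrite -(inj_eq sg_inj) in o02; rewrite -(inj_eq sg_inj) in o12.
  have := detP_neq0 two0 o01 o02 o12 => Dc _.
  rewrite /detP D9T in Dc.
  have [z0 z1 z2] := indep3 Dc (hc _) (hc _) (hc _).
  by move=> j; rewrite /kappa z0 z1 z2 !mul0r !addr0.
Qed.
End T.

Theorem theorem3p10 (F : finFieldType) (m : nat) :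
  #|F| = (2 ^ m)%N -> (4 <= #|F|)%N ->
  (exists A : aoa_array F 'rV[F]_((#|F| - 1) - 1) (#|F| ^ (#|F| - 1)) (#|F| + 2),
     is_linear_AOA 1 (#|F| - 1) (#|F| + 2) A) /\
  (exists A : aoa_array F 'rV[F]_((#|F| - 1) - 3) (#|F| ^ (#|F| - 1)) (#|F| + 2),
     is_linear_AOA 3 (#|F| - 1) (#|F| + 2) A).
Proof.
move=> hc h4.
have ch : (2 \in [pchar F])%N by apply: (card_finPcharP hc).
have two0 : 2%:R = 0 :> F := pcharf0 ch.
have m0 : (0 < m)%N by case: m hc h4 => // ->.
have cardF0 : (#|F|%:R : F) = 0 by rewrite hc natrX two0 expr0n; move: m0; rewrite lt0n => /negbTE ->.
split; [exact: s1_exists | exact: s3_exists].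
Qed.
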